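(* For every positive integer $n$, the fan $F_{3n}$ has a vertex-minor isomorphic to a cycle of length $2n+1$.
   Context: Graphs are finite, simple, undirected. The fan $F_m$ is the graph on $m$ vertices with a vertex $c$ (the center) such that $F_m\setminus c$ is a path on $m-1$ vertices and $c$ is adjacent to all other vertices. Local complementation $G*v$ complements the subgraph induced on the neighborhood of $v$; a vertex-minor of $G$ is an induced subgraph of a graph obtained from $G$ by a sequence of local complementations. *)

(* Defs.v *)
From mathcomp Require Import all_boot.
Set Implicit Arguments. Unset Strict Implicit. Unset Printing Implicit Defensive.

Definition simple_graph (T : finType) (G : rel T) : Prop :=
  symmetric G /\ irreflexive G.

Definition local_comp (T : finType) (G : rel T) (v : T) : rel T :=
  fun x y => if [&& x != y, G v x & G v y] then ~~ G x y else G x y.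

Definition local_comp_seq (T : finType) (G : rel T) (s : seq T) : rel T :=
  foldl (@local_comp T) G s.

Definition iso_induced (U T : finType) (H : rel U) (G : rel T) : Prop :=
  exists f : U -> T, injective f /\ forall x y : U, H x y = G (f x) (f y).

Definition vertex_minor (U T : finType) (H : rel U) (G : rel T) : Prop :=
  exists s : seq T, iso_induced H (local_comp_seq G s).

(* The fan F_m on vertices 0..m-1: center 0, path 1 - 2 - ... - (m-1). *)
Definition fan (m : nat) : rel 'I_m :=
  fun x y => (x != y) &&
    [|| val x == 0, val y == 0, (val x).+1 == val y | (val y).+1 == val x].

Definition cycle_graph (k : nat) : rel 'I_k :=
  fun x y => (x != y) &&
    (((val x).+1 %% k == val y) || ((val y).+1 %% k == val x)).

Arguments fan m : clear implicits.
Arguments cycle_graph k : clear implicits.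

(* Main.v *)
Require Import Defs.
From mathcomp Require Import all_boot zify.
Definition bad m b := [&& b %% 3 != 0, 2 <= b & b <= 3*m+1].
Definition E m a b := [|| [&& a == 0, 0 < b & ~~ bad m b], a.+1 == b | [&& a %% 3 == 2, b == a + 2 & a.+1 <= 3*m]].
Definition Gn m a b := (a != b) && (E m a b || E m b a).

Lemma nbr m b : Gn m (3*m.+1) b = [|| b == 0, b == 3*m+2 | b == 3*m+4].
Proof. rewrite /Gn /E /bad.
have -> : (3 * m.+1) %% 3 = 0 by rewrite modnMr.
have := divn_eq b 3; have := ltn_pmod b (isT : 0 < 3).
move: (b %/ 3) (b %% 3) => q r.
lia. Qed.

Lemma Estep m a b : ~~ ((a==0) && ((b == 3*m+2) || (b==3*m+4))) ->
  ~~((a==3*m+2) && (b == 3*m+4)) -> E m.+1 a b = E m a b.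
Proof. rewrite /E /bad.
have := divn_eq b 3; have := ltn_pmod b (isT : 0 < 3).
have := divn_eq a 3; have := ltn_pmod a (isT : 0 < 3).
move: (b %/ 3) (b %% 3) (a %/ 3) (a %% 3) => q r q' r'.
Time lia. Qed.
Lemma step m a b : Gn m.+1 a b =
  if [&& a != b, Gn m (3*m.+1) a & Gn m (3*m.+1) b] then ~~ Gn m a b else Gn m a b.
Proof.
case: ifP => c.
  move/and3P: c => [neq Na Nb]; rewrite !nbr in Na Nb.
  have h3 : (3 * m + 2) %% 3 = 2 by rewrite -modnDml modnMr.
  have h4 : (3 * m + 4) %% 3 = 1 by rewrite -modnDml modnMr.
  move: neq; rewrite /Gn /E /bad.
  case/or3P: Na => /eqP ->; case/or3P: Nb => /eqP -> //=; rewrite ?h3 ?h4; lia.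
rewrite !nbr in c.
rewrite /Gn Estep ?(Estep m b a) //; lia.
Qed.

Lemma seq_main N (s : seq 'I_N) m : map val s = [seq 3 * k | k <- iota 1 m] ->
  forall x y, local_comp_seq (fan N) s x y = Gn m x y.
Proof.
elim/last_ind: s m => [|s v IH] [|m].
- move=> _ x y; rewrite /local_comp_seq /= /fan /Gn /E /bad.
  rewrite [x != y](_ : _ = (nat_of_ord x != nat_of_ord y)) //.
  rewrite /=; move: (nat_of_ord x) (nat_of_ord y) => a b; lia.
- by [].
- by move=> /(f_equal size); rewrite size_map size_rcons.
- rewrite map_rcons -[m.+1]addn1 iotaD cats1 map_rcons => /rcons_inj [/IH {}IH hv] x y.
  rewrite /local_comp_seq foldl_rcons -/(local_comp_seq _ _) /local_comp !IH hv.
  by rewrite add1n addn1 -step.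
Qed.

Definition g (i : nat) := if i == 0 then 0 else 3 * ((i - 1) %/ 2) + (i - 1) %% 2 + 1.

Lemma g_lt n i : 0 < n -> i < 2 * n + 1 -> g i < 3 * n.
Proof.
rewrite /g => hn hi; case: eqP => _; first lia.
have := divn_eq (i - 1) 2; have := ltn_pmod (i - 1) (isT : 0 < 2).
move: ((i-1) %/ 2) ((i-1) %% 2) => q r; lia.
Qed.

Lemma par i : i = 0 \/ exists j, i = 2 * j + 1 /\ g i = 3 * j + 1 \/ i = 2 * j + 2 /\ g i = 3 * j + 2.
Proof.
case: i => [|i]; [by left | right].
have := divn_eq i 2; have := ltn_pmod i (isT : 0 < 2).
rewrite /g /= subn1 /=.
move: (i %/ 2) (i %% 2) => q [|[|r]] ? ?; exists q; lia.
Qed.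

Lemma modS K x y : x < K -> y < K -> (x.+1 %% K == y) = (x.+1 == y) || ((x.+1 == K) && (y == 0)).
Proof.
move=> hx hy; case: (ltngtP x.+1 K) => h.
- rewrite modn_small //; lia.
- lia.
- rewrite h modnn; lia.
Qed.

Lemma cyc n x y : 0 < n -> x < 2 * n + 1 -> y < 2 * n + 1 ->
  (x != y) && ((x.+1 %% (2 * n + 1) == y) || (y.+1 %% (2 * n + 1) == x)) = Gn n.-1 (g x) (g y).
Proof.
move=> hn hx hy; rewrite !modS //; move: hx hy.
have m3 : forall j r, r < 3 -> (3 * j + r) %% 3 = r.
  by move=> j r hr; rewrite -modnDml modnMr modn_small.
case: (par x) => [->|[j [[-> ->]|[-> ->]]]]; case: (par y) => [->|[k [[-> ->]|[-> ->]]]];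
  rewrite /g /Gn /E /bad /= ?m3 //; lia.
Qed.

Lemma g_inj x y : g x = g y -> x = y.
Proof.
case: (par x) => [->|[j [[-> ->]|[-> ->]]]]; case: (par y) => [->|[k [[-> ->]|[-> ->]]]];
  rewrite /g /=; lia.
Qed.

Theorem lemma4p2 (n : nat) (hn : 0 < n) :
  vertex_minor (cycle_graph (2 * n + 1)) (fan (3 * n)).
Proof.
pose l := [seq 3 * k | k <- iota 1 n.-1].
pose s : seq 'I_(3 * n) := pmap insub l.
have hs : map val s = l.
  rewrite /s (pmap_filter (@insubK _ _ _)).
  apply/all_filterP/allP => z /mapP [k]; rewrite mem_iota => hk ->.
  rewrite /= insubT //; lia.
exists s.
exists (fun i => Ordinal (@g_lt n _ hn (ltn_ord i))); split.
  by move=> x y [] /g_inj /val_inj.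
move=> x y; rewrite (@seq_main _ _ _ hs) /=.
rewrite /cycle_graph -cyc //.
Qed.
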